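(* For every $(w,x,y,z)\in X\setminus\{(3,3,3,3)\}$, up to conjugation we have $$ A=\rho(\alpha)= \begin{pmatrix} 0 & 0 & 1& 0 \\ 1 & 0 & 0 & 0 \\ 0 & 1 & 0 & 0 \\ 0 & 0 & 0 & 1 \end{pmatrix} \qquad \textrm{ and }\qquad AC=\rho(\alpha\gamma)= \begin{pmatrix} \lambda_1 & 0 & 0 & 0 \\ 0 & \lambda_2 & 0 & 0 \\ 0 & 0 & \lambda_3 & 0 \\ 0 & 0 & 0 & 1 \end{pmatrix} $$ with $\lambda_i\in \mathbb{R}$, $\lambda_i>0$ and $\lambda_1\neq \pm 1$.
   Context: Let $O$ be the hyperbolic 3--orbifold obtained from the one-tetrahedron, two-vertex triangulation of $S^3$ by deleting the vertices and modelling edge neighbourhoods on $\mathbb{R}^3/\langle r\rangle$, $r$ a rotation by $120^\circ$. Writing the ideal simplex as $[v_1,v_2,v_3,v_4]$ with face pairings $\alpha[v_1,v_2,v_3]=[v_1,v_2,v_4]$ and $\beta[v_2,v_3,v_4]=[v_1,v_3,v_4]$, one has $\pi_1^{orb}(O)=\langle \alpha,\beta : \alpha^3=\beta^3=(\alpha\beta\alpha^{-1}\beta^{-1})^3=1\rangle$. Set $\gamma=[\alpha,\beta]=\alpha\beta\alpha^{-1}\beta^{-1}$. Real projective structures on $O$ modelled on a 3--simplex have holonomy $\rho$ with (up to conjugacy) $$A=\rho(\alpha)=\begin{pmatrix} 1 & 0 & 0 & a_1 \\ 0 & 1 & 0 & a_2 \\ 0 & 0 & 0 & -1\\ 0 &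 0 & 1 & -1 \end{pmatrix},\quad B=\rho(\beta)=\begin{pmatrix} -1 & 1 & 0 & 0 \\ -1 & 0 & 0 & 0 \\ b_3 & 0 & 1 & 0\\ b_4 & 0 & 0 & 1 \end{pmatrix},$$ where $(a_1+a_2)(b_3+b_4)=3+a_1a_2b_3b_4$, and $C=ABA^{-1}B^{-1}=\rho(\gamma)$. The parameters are $w=a_1b_4$, $x=a_1b_3$, $y=a_2b_3$, $z=a_2b_4$ (equivalently $w=2+\operatorname{tr}AB$, $x=2+\operatorname{tr}A^{-1}B$, $y=2+\operatorname{tr}A^{-1}B^{-1}$, $z=2+\operatorname{tr}AB^{-1}$). $X$ denotes the connected component, containing $(3,3,3,3)$, of the set of $(w,x,y,z)\in\mathbb{R}^4$ satisfying $w+x+y+z=3+wy$ and $wy=zx$; it is distinguished from the other component by $x>1$ and $z>1$. The point $(3,3,3,3)$ corresponds to the complete hyperbolic structure on $O$. The stabilizer of $v_1$ is generated by $\alpha,\gamma$ (a $(3,3,3)$-turnover group), whose maximal torsion-free subgroup is $\langle\alpha\gamma,\gamma\alpha\rangle\cong\mathbb{Z}^2$. *)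

(* Defs.v *)
From HB Require Import structures.
From mathcomp Require Import all_boot all_order all_algebra.
From mathcomp Require Import reals.
Set Implicit Arguments. Unset Strict Implicit. Unset Printing Implicit Defensive.
Import Order.TTheory GRing.Theory Num.Theory.
Local Open Scope ring_scope.

Section Holonomy.
Variable R : realType.

Definition matA (a1 a2 : R) : 'M[R]_4 :=
  \matrix_(i < 4, j < 4)
    match nat_of_ord i, nat_of_ord j with
    | 0, 0 => 1 | 1, 1 => 1
    | 0, 3 => a1 | 1, 3 => a2
    | 2, 3 => -1
    | 3, 2 => 1 | 3, 3 => -1
    | _, _ => 0
    end.

Definition matB (b3 b4 : R) : 'M[R]_4 :=
  \matrix_(i < 4, j < 4)
    match nat_of_ord i, nat_of_ord j with
    | 0, 0 => -1 | 0, 1 => 1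
    | 1, 0 => -1
    | 2, 0 => b3 | 2, 2 => 1
    | 3, 0 => b4 | 3, 3 => 1
    | _, _ => 0
    end.

Definition matC (a1 a2 b3 b4 : R) : 'M[R]_4 :=
  matA a1 a2 *m matB b3 b4 *m invmx (matA a1 a2) *m invmx (matB b3 b4).

Definition permA : 'M[R]_4 :=
  \matrix_(i < 4, j < 4)
    match nat_of_ord i, nat_of_ord j with
    | 0, 2 => 1 | 1, 0 => 1 | 2, 1 => 1 | 3, 3 => 1
    | _, _ => 0
    end.

Definition diag4 (l1 l2 l3 : R) : 'M[R]_4 :=
  \matrix_(i < 4, j < 4)
    if i == j then
      match nat_of_ord i with 0 => l1 | 1 => l2 | 2 => l3 | _ => 1 end
    else 0.

(* The component X of {w+x+y+z = 3 + wy, wy = zx} containing (3,3,3,3),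
   via the characterisation x > 1, z > 1 given in the paper. *)
Definition inX (w x y z : R) : Prop :=
  [/\ w + x + y + z = 3 + w * y, w * y = z * x, 1 < x & 1 < z].

End Holonomy.

(* Main.v *)
Require Import Defs.
From HB Require Import structures.
From mathcomp Require Import all_boot all_order all_algebra.
From mathcomp Require Import reals.
Import Order.TTheory GRing.Theory Num.Theory.
Local Open Scope ring_scope.
From mathcomp Require Import ring lra.

Section S3.
Context {R : realType}.

Definition mat3 (n00 n01 n02 n10 n11 n12 n20 n21 n22 : R) : 'M[R]_3 :=
  \matrix_(i < 3, j < 3)
  match nat_of_ord i, nat_of_ord j with
  | 0,0 => n00 | 0,1 => n01 | 0,2 => n02
  | 1,0 => n10 | 1,1 => n11 | 1,2 => n12
  | 2,0 => n20 | 2,1 => n21 | _,_ => n22 end.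
Definition vec3 (x0 x1 x2 : R) : 'rV[R]_3 :=
  \row_(j < 3) match nat_of_ord j with 0 => x0 | 1 => x1 | _ => x2 end.

Lemma vec3_mul x0 x1 x2 n00 n01 n02 n10 n11 n12 n20 n21 n22 :
  vec3 x0 x1 x2 *m mat3 n00 n01 n02 n10 n11 n12 n20 n21 n22 =
  vec3 (x0*n00 + x1*n10 + x2*n20) (x0*n01 + x1*n11 + x2*n21) (x0*n02 + x1*n12 + x2*n22).
Proof.
apply/matrixP => i [[|[|[|?]]] ?]; rewrite !mxE !big_ord_recl big_ord0 !mxE //=; ring.
Qed.

Lemma vec3_inj x0 x1 x2 y0 y1 y2 :
  vec3 x0 x1 x2 = vec3 y0 y1 y2 -> [/\ x0 = y0, x1 = y1 & x2 = y2].
Proof.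
move/matrixP => h.
have := h 0 0; have := h 0 1; have := h 0 2%:R; rewrite !mxE /= => -> -> ->.
by [].
Qed.

Lemma vec3_eta (Y : 'rV[R]_3) : Y = vec3 (Y 0 0) (Y 0 1) (Y 0 2%:R).
Proof.
apply/matrixP => i [[|[|[|?]]] Hj]; rewrite !mxE //= (ord1 i);
  by congr (Y _ _); apply/val_inj.
Qed.

Lemma vec3Z k x0 x1 x2 : k *: vec3 x0 x1 x2 = vec3 (k*x0) (k*x1) (k*x2).
Proof. by apply/matrixP => i [[|[|[|?]]] ?]; rewrite !mxE. Qed.
Lemma vec3D x0 x1 x2 y0 y1 y2 : vec3 x0 x1 x2 + vec3 y0 y1 y2 = vec3 (x0+y0) (x1+y1) (x2+y2).
Proof. by apply/matrixP => i [[|[|[|?]]] ?]; rewrite !mxE. Qed.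
Lemma vec30 : vec3 0 0 0 = 0.
Proof. by apply/matrixP => i [[|[|[|?]]] ?]; rewrite !mxE. Qed.
Lemma vec3_eq0 x0 x1 x2 : (vec3 x0 x1 x2 = 0) <-> [/\ x0 = 0, x1 = 0 & x2 = 0].
Proof.
split; first by rewrite -vec30 => /vec3_inj.
by case=> -> -> ->; rewrite vec30.
Qed.
Lemma vec3_neq0 x0 x1 x2 : (vec3 x0 x1 x2 != 0) <-> ~ [/\ x0 = 0, x1 = 0 & x2 = 0].
Proof. by split => [/eqP h /vec3_eq0 //| h]; apply/eqP => /vec3_eq0. Qed.

Definition det3 n00 n01 n02 n10 n11 n12 n20 n21 n22 : R :=
  n00*(n11*n22 - n12*n21) - n01*(n10*n22 - n12*n20) + n02*(n10*n21 - n11*n20).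

Lemma detker n00 n01 n02 n10 n11 n12 n20 n21 n22 y0 y1 y2 :
  y0*n00 + y1*n10 + y2*n20 = 0 -> y0*n01 + y1*n11 + y2*n21 = 0 ->
  y0*n02 + y1*n12 + y2*n22 = 0 -> ~ [/\ y0 = 0, y1 = 0 & y2 = 0] ->
  det3 n00 n01 n02 n10 n11 n12 n20 n21 n22 = 0.
Proof.
move=> h0 h1 h2 hy.
set d := det3 _ _ _ _ _ _ _ _ _.
have e0 : d * y0 = (y0*n00 + y1*n10 + y2*n20) * (n11*n22 - n12*n21)
   + (y0*n01 + y1*n11 + y2*n21) * (- (n10*n22 - n12*n20))
   + (y0*n02 + y1*n12 + y2*n22) * (n10*n21 - n11*n20) by rewrite /d /det3; ring.
have e1 : d * y1 = (y0*n00 + y1*n10 + y2*n20) * (- (n01*n22 - n02*n21))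
   + (y0*n01 + y1*n11 + y2*n21) * (n00*n22 - n02*n20)
   + (y0*n02 + y1*n12 + y2*n22) * (- (n00*n21 - n01*n20)) by rewrite /d /det3; ring.
have e2 : d * y2 = (y0*n00 + y1*n10 + y2*n20) * (n01*n12 - n02*n11)
   + (y0*n01 + y1*n11 + y2*n21) * (- (n00*n12 - n02*n10))
   + (y0*n02 + y1*n12 + y2*n22) * (n00*n11 - n01*n10) by rewrite /d /det3; ring.
rewrite h0 h1 h2 !mul0r !addr0 in e0 e1 e2.
apply/eqP; apply/negP => /negP dn0; apply: hy.
by split; [move: e0 | move: e1 | move: e2]; move/eqP; rewrite mulf_eq0 (negbTE dn0) => /eqP.
Qed.

Lemma helpk (N D X : R) : N != 0 -> D * X = N * (D / N * X).
Proof. by move=> h; field. Qed.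

Lemma cross_ker (c0 c1 c2 d0 d1 d2 e0 e1 e2 : R) :
  let X0 := c1*d2 - c2*d1 in let X1 := c2*d0 - c0*d2 in let X2 := c0*d1 - c1*d0 in
  X0*e0 + X1*e1 + X2*e2 = 0 -> ~ [/\ X0 = 0, X1 = 0 & X2 = 0] ->
  [/\ X0*c0 + X1*c1 + X2*c2 = 0, X0*d0 + X1*d1 + X2*d2 = 0 &
  forall y0 y1 y2, y0*c0 + y1*c1 + y2*c2 = 0 -> y0*d0 + y1*d1 + y2*d2 = 0 ->
    exists k, [/\ y0 = k*X0, y1 = k*X1 & y2 = k*X2]].
Proof.
move=> X0 X1 X2 he hX; split; rewrite /X0 /X1 /X2; try ring.
move=> y0 y1 y2 hc hd.
have nn : X0*X0 + X1*X1 + X2*X2 != 0.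
  apply/negP => /eqP h; apply: hX.
  split; apply/eqP; rewrite -sqrf_eq0 expr2 eq_le; apply/andP; split; nra.
set N := X0*X0 + X1*X1 + X2*X2 in nn.
set D := y0*X0 + y1*X1 + y2*X2.
exists (D / N).
have k0 : N * y0 = D * X0 + (y0*d0 + y1*d1 + y2*d2) * (X1*c2 - X2*c1)
                   - (y0*c0 + y1*c1 + y2*c2) * (X1*d2 - X2*d1)
  by rewrite /N /D /X0 /X1 /X2; ring.
have k1 : N * y1 = D * X1 + (y0*d0 + y1*d1 + y2*d2) * (X2*c0 - X0*c2)
                   - (y0*c0 + y1*c1 + y2*c2) * (X2*d0 - X0*d2)
  by rewrite /N /D /X0 /X1 /X2; ring.
have k2 : N * y2 = D * X2 + (y0*d0 + y1*d1 + y2*d2) * (X0*c1 - X1*c0)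
                   - (y0*c0 + y1*c1 + y2*c2) * (X0*d1 - X1*d0)
  by rewrite /N /D /X0 /X1 /X2; ring.
rewrite hc hd !mul0r !subr0 !addr0 in k0 k1 k2.
by split; apply: (mulfI nn); rewrite ?k0 ?k1 ?k2; apply: helpk.
Qed.

Lemma mat3_mul n00 n01 n02 n10 n11 n12 n20 n21 n22 k00 k01 k02 k10 k11 k12 k20 k21 k22 :
  mat3 n00 n01 n02 n10 n11 n12 n20 n21 n22 *m mat3 k00 k01 k02 k10 k11 k12 k20 k21 k22 =
  mat3 (n00*k00 + n01*k10 + n02*k20) (n00*k01 + n01*k11 + n02*k21) (n00*k02 + n01*k12 + n02*k22)
       (n10*k00 + n11*k10 + n12*k20) (n10*k01 + n11*k11 + n12*k21) (n10*k02 + n11*k12 + n12*k22)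
       (n20*k00 + n21*k10 + n22*k20) (n20*k01 + n21*k11 + n22*k21) (n20*k02 + n21*k12 + n22*k22).
Proof.
apply/matrixP => -[[|[|[|?]]] ?] -[[|[|[|?]]] ?];
  rewrite !mxE !big_ord_recl big_ord0 !mxE //=; ring.
Qed.

Lemma ker3 n00 n01 n02 n10 n11 n12 n20 n21 n22 :
  det3 n00 n01 n02 n10 n11 n12 n20 n21 n22 = 0 ->
  (n00*n11 - n01*n10) + (n00*n22 - n02*n20) + (n11*n22 - n12*n21) != 0 ->
  exists x0 x1 x2, [/\ ~ [/\ x0 = 0, x1 = 0 & x2 = 0],
    x0*n00 + x1*n10 + x2*n20 = 0, x0*n01 + x1*n11 + x2*n21 = 0,
    x0*n02 + x1*n12 + x2*n22 = 0 &
    forall y0 y1 y2, y0*n00 + y1*n10 + y2*n20 = 0 -> y0*n01 + y1*n11 + y2*n21 = 0 ->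
      y0*n02 + y1*n12 + y2*n22 = 0 ->
      exists k, [/\ y0 = k*x0, y1 = k*x1 & y2 = k*x2]].
Proof.
move=> hd hpm.
have [h01|h01] := eqVneq (n00*n11 - n01*n10) 0; last first.
  have he : (n10*n21 - n20*n11)*n02 + (n20*n01 - n00*n21)*n12 + (n00*n11 - n10*n01)*n22 = 0.
    by rewrite -hd /det3; ring.
  have hX : ~ [/\ n10*n21 - n20*n11 = 0, n20*n01 - n00*n21 = 0 & n00*n11 - n10*n01 = 0].
    by case=> _ _ h; move: h01; rewrite (mulrC n01) h eqxx.
  have [c0 c1 ck] := @cross_ker _ _ _ _ _ _ _ _ _ he hX.
  exists (n10*n21 - n20*n11), (n20*n01 - n00*n21), (n00*n11 - n10*n01); split => //.
  move=> y0 y1 y2 e0 e1 e2; exact: ck.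
have [h02|h02] := eqVneq (n00*n22 - n02*n20) 0; last first.
  have he : (n10*n22 - n20*n12)*n01 + (n20*n02 - n00*n22)*n11 + (n00*n12 - n10*n02)*n21 = 0.
    by rewrite -[RHS]oppr0 -hd /det3; ring.
  have hX : ~ [/\ n10*n22 - n20*n12 = 0, n20*n02 - n00*n22 = 0 & n00*n12 - n10*n02 = 0].
    case=> _ h _; move: h02; have -> : n00*n22 - n02*n20 = - (n20*n02 - n00*n22) by ring.
    by rewrite h oppr0 eqxx.
  have [c0 c1 ck] := @cross_ker _ _ _ _ _ _ _ _ _ he hX.
  exists (n10*n22 - n20*n12), (n20*n02 - n00*n22), (n00*n12 - n10*n02); split => //.
  move=> y0 y1 y2 e0 e1 e2; exact: ck.
have h12 : n11*n22 - n12*n21 != 0 by move: hpm; rewrite h01 h02 !add0r.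
have he : (n11*n22 - n21*n12)*n00 + (n21*n02 - n01*n22)*n10 + (n01*n12 - n11*n02)*n20 = 0.
  by rewrite -hd /det3; ring.
have hX : ~ [/\ n11*n22 - n21*n12 = 0, n21*n02 - n01*n22 = 0 & n01*n12 - n11*n02 = 0].
  by case=> h _ _; move: h12; rewrite (mulrC n12) h eqxx.
have [c0 c1 ck] := @cross_ker _ _ _ _ _ _ _ _ _ he hX.
exists (n11*n22 - n21*n12), (n21*n02 - n01*n22), (n01*n12 - n11*n02); split => //.
move=> y0 y1 y2 e0 e1 e2; exact: ck.
Qed.

Lemma lincomb (a b c v0 v1 v2 l mu nu : R) :
  v0*a + v1*b + v2*c = 0 -> v0*(l*a) + v1*(mu*b) + v2*(nu*c) = 0 ->
  v0*(l*(l*a)) + v1*(mu*(mu*b)) + v2*(nu*(nu*c)) = 0 ->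
  v0*(l-mu)*(l-nu)*a = 0.
Proof.
move=> e0 e1 e2.
have -> : v0*(l-mu)*(l-nu)*a = (v0*(l*(l*a)) + v1*(mu*(mu*b)) + v2*(nu*(nu*c)))
   - (mu+nu)*(v0*(l*a) + v1*(mu*b) + v2*(nu*c)) + mu*nu*(v0*a + v1*b + v2*c) by ring.
by rewrite e0 e1 e2; ring.
Qed.

Lemma solve1 (v1 v2 e f : R) : v2 != 0 -> v1*e + v2*f = 0 -> f = - (v1/v2) * e.
Proof.
move=> h H; have -> : f = (v2*f)/v2 by field.
have -> : v2*f = -(v1*e) by lra.
by field.
Qed.
End S3.

Section Gen.
Context {R : realType}.

Lemma sos_id (a b : R) :
  (a*b - a - b - 4)*(a*b - 1) + (a^+2 + b) + (a + b^+2) =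
  (a*b - (a+b)/2 - 2)^+2 + 3/4*(a-b)^+2.
Proof. by field. Qed.

Lemma region' (a b W Z : R) : W + b = a*Z -> a + Z = W*b -> 0 < a -> 0 < Z ->
  ~ [/\ a = 2, b = 2, W = 2 & Z = 2] ->
  0 < a*b - a - b + W + Z - 4 /\ 0 <= W*Z - W - Z + a + b - 4.
Proof.
move=> e1 e2 ha hZ0 hn.
have eW : W = a*Z - b by lra.
have hWb : 0 < W*b by nra.
have hWpb : 0 < W + b by nra.
have hW0 : 0 < W by nra.
have hb0 : 0 < b by nra.
have hZ : Z*(a*b - 1) = a + b^+2.
  move: e2; rewrite eW => e2; lra.
have hab : 0 < a*b - 1.
  rewrite ltNge; apply/negP => h.
  have : Z*(a*b-1) <= 0 by nra.
  rewrite hZ => h'. have : 0 < a + b^+2 by nra. lra.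
have hW : W*(a*b - 1) = a^+2 + b.
  have -> : W*(a*b-1) = a*(Z*(a*b-1)) - b*(a*b-1) by rewrite eW; ring.
  rewrite hZ; ring.
set T := a*b - a - b + W + Z - 4.
have hT : T*(a*b-1) = (a*b - (a+b)/2 - 2)^+2 + 3/4*(a-b)^+2.
  rewrite -sos_id -hW -hZ /T; ring.
have sos0 : 0 <= (a*b - (a+b)/2 - 2)^+2 + 3/4*(a-b)^+2.
  apply: addr_ge0; first exact: sqr_ge0.
  by apply: mulr_ge0; [lra | exact: sqr_ge0].
split.
  have T0 : 0 <= T by nra.
  rewrite lt_neqAle T0 andbT eq_sym; apply/eqP => T00.
  rewrite T00 mul0r in hT.
  have s1 : (a - b)^+2 = 0.
    apply/eqP; rewrite eq_le sqr_ge0 andbT.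
    have := sqr_ge0 (a*b - (a+b)/2 - 2); nra.
  have eab : a = b by apply/eqP; rewrite -subr_eq0 -sqrf_eq0 s1.
  have s2 : (a*b - (a+b)/2 - 2)^+2 = 0 by rewrite s1 mulr0 addr0 in hT.
  have e3 : a*b - (a+b)/2 - 2 = 0 by apply/eqP; rewrite -sqrf_eq0 s2.
  rewrite -eab in e3.
  have : (a - 2)*(a + 1) = 0 by rewrite -[RHS]e3; field.
  move/eqP; rewrite mulf_eq0 => /orP [/eqP a2|/eqP a1]; last by lra.
  have a2' : a = 2 by lra.
  apply: hn; have b2 : b = 2 by rewrite -eab.
  have Z2 : Z = 2.
    move: hZ; rewrite a2' b2 => hZ'; lra.
  by split => //; rewrite eW a2' b2 Z2; ring.
have eb : b = a*Z - W by lra.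
have hA : a*(W*Z - 1) = W^+2 + Z.
  move: e2; rewrite eb => e2'; lra.
have hwz : 0 < W*Z - 1.
  rewrite ltNge; apply/negP => h.
  have : a*(W*Z-1) <= 0 by nra.
  rewrite hA => h'. have : 0 < W^+2 + Z by nra. lra.
have hB : b*(W*Z - 1) = Z^+2 + W.
  have -> : b*(W*Z-1) = Z*(a*(W*Z-1)) - W*(W*Z-1) by rewrite eb; ring.
  rewrite hA; ring.
set S := W*Z - W - Z + a + b - 4.
have hS : S*(W*Z-1) = (W*Z - (W+Z)/2 - 2)^+2 + 3/4*(W-Z)^+2.
  rewrite -sos_id /S.
  have -> : (W * Z - W - Z + a + b - 4) * (W * Z - 1) =
    (W*Z - W - Z - 4)*(W*Z - 1) + a*(W*Z-1) + b*(W*Z-1) by ring.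
  rewrite hA hB; ring.
have sos1 : 0 <= (W*Z - (W+Z)/2 - 2)^+2 + 3/4*(W-Z)^+2.
  apply: addr_ge0; first exact: sqr_ge0.
  by apply: mulr_ge0; [lra | exact: sqr_ge0].
nra.
Qed.

Lemma cubic_pos (t s l : R) : 0 <= t -> 0 <= s ->
  l^+3 - t* l^+2 + s* l - 1 = 0 -> 0 < l.
Proof.
move=> ht hs hp; rewrite ltNge; apply/negP => hl.
have h1' : l^+3 <= 0 by rewrite exprS; nra.
have h2' : 0 <= t* l^+2 by apply: mulr_ge0 => //; rewrite sqr_ge0.
have h3' : s* l <= 0 by nra.
lra.
Qed.

Lemma root_exists (t s : R) : 3 < t -> 0 <= s ->
  exists l, l^+3 - t* l^+2 + s* l - 1 = 0 /\ l != 1.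
Proof.
move=> ht hs.
pose P : {poly R} := 'X^3 - t%:P * 'X^2 + s%:P * 'X - 1.
have PE x : P.[x] = x^+3 - t*x^+2 + s*x - 1 by rewrite /P !hornerE.
have [lts|lst|est] := ltgtP s t.
- have [l /andP [l1 l2] hr] : exists2 x, 1 <= x <= t + 1 & root P x.
    apply: poly_ivt; first lra.
    rewrite !PE; apply/andP; split; first lra.
    have : 0 < (t+1)^+2 + s*(t+1) - 1.
      have h1 : 0 <= s*(t+1) by apply: mulr_ge0; lra.
      have h2 : 1 < (t+1)^+2 by rewrite expr2; nra.
      lra.
    have -> : (t + 1) ^+ 3 - t * (t + 1) ^+ 2 + s * (t + 1) - 1 = (t+1)^+2 + s*(t+1) - 1 by ring.
    lra.
  exists l; move/eqP: hr; rewrite PE => hr; split => //.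
  by apply/eqP => l1'; move: hr; rewrite l1'; lra.
- have [l /andP [l1 l2] hr] : exists2 x, 0 <= x <= 1 & root P x.
    apply: poly_ivt; first lra.
    rewrite !PE; apply/andP; split; lra.
  exists l; move/eqP: hr; rewrite PE => hr; split => //.
  by apply/eqP => l1'; move: hr; rewrite l1'; lra.
pose Q : {poly R} := 'X^2 - (t - 1)%:P * 'X + 1.
have QE x : Q.[x] = x^+2 - (t-1)*x + 1 by rewrite /Q !hornerE.
have [l /andP [l1 l2] hr] : exists2 x, 1 <= x <= t & root Q x.
  apply: poly_ivt; first lra.
  rewrite !QE; apply/andP; split; lra.
move/eqP: hr; rewrite QE => hr.
exists l; split.
  have -> : l ^+ 3 - t * l ^+ 2 + s * l - 1 = (l - 1)*(l^+2 - (t - 1) * l + 1) by rewrite est; ring.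
  by rewrite hr mulr0.
by apply/eqP => l1'; move: hr; rewrite l1'; lra.
Qed.

Lemma root_simple (t s : R) : 3 < t -> 0 <= s ->
  exists l, [/\ l^+3 - t* l^+2 + s* l - 1 = 0, l != 1,
     3* l^+2 - 2*t* l + s != 0 & 0 < l].
Proof.
move=> ht hs.
have [l [hp hl1]] := root_exists _ _ ht hs.
have l0 : 0 < l by apply: (cubic_pos _ _ _ _ _ hp); lra.
have [hd|hd] := eqVneq (3* l^+2 - 2*t* l + s) 0; last by exists l.
have ln0 : l != 0 by rewrite gt_eqF.
have e1 : t* l^+2 = 2* l^+3 + 1.
  have : l*(3* l^+2 - 2*t* l + s) = 0 by rewrite hd mulr0.
  move=> h; have : 3* l^+3 - 2*t* l^+2 + s* l = 0 by rewrite -[RHS]h; ring.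
  lra.
have e2 : s* l = l^+3 + 2.
  have : l*(3* l^+2 - 2*t* l + s) = 0 by rewrite hd mulr0.
  move=> h; have : 3* l^+3 - 2*t* l^+2 + s* l = 0 by rewrite -[RHS]h; ring.
  lra.
have htE : t = (2* l^+3 + 1)/l^+2.
  by apply: (mulIf (expf_neq0 2 ln0)); rewrite e1 divfK // expf_neq0.
have hsE : s = (l^+3 + 2)/l.
  by apply: (mulIf ln0); rewrite e2 divfK.
have l3 : l^+3 != 1.
  apply/eqP => h.
  have : (l - 1)*(l^+2 + l + 1) = 0 by rewrite -[RHS](subrr 1) -{3}h; ring.
  move/eqP; rewrite mulf_eq0 => /orP [/eqP|/eqP]; first by move=> h'; move: hl1; rewrite (_ : l = 1) //; lra.
  by nra.
pose m := (l^+2)^-1.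
have m0 : 0 < m by rewrite /m invr_gt0 exprn_gt0.
exists m; split => //.
- rewrite /m htE hsE; field; exact: ln0.
- apply/eqP => m1; move: m1; rewrite /m => /eqP; rewrite invr_eq1 => /eqP h.
  have : (l - 1)*(l + 1) = 0 by rewrite (_ : (l-1)*(l+1) = l^+2 - 1); [rewrite h subrr | ring].
  move/eqP; rewrite mulf_eq0 => /orP [/eqP|/eqP] h'; [move: hl1; rewrite (_ : l = 1) //; lra | lra].
- have -> : 3 * m^+2 - 2 * t * m + s = (m - l)^+2.
    rewrite /m htE hsE; field; exact: ln0.
  rewrite sqrf_eq0 subr_eq0; apply/eqP => ml.
  have e : l^+3 = m * l^+2 by rewrite exprS ml.
  by move: l3; rewrite e /m mulVf ?eqxx // expf_neq0.
Qed.
End Gen.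

Ltac mxtac := apply/matrixP => -[[|[|[|[|?]]]] ?] -[[|[|[|[|?]]]] ?];
  rewrite !mxE !big_ord_recl !big_ord0 !mxE //=; try ring.

Section S4.
Variable R : realType.
Variables a1 a2 b3 b4 : R.

Definition A2m : 'M[R]_4 := \matrix_(i < 4, j < 4)
  match nat_of_ord i, nat_of_ord j with
  | 0,0 => 1 | 0,2 => a1 | 1,1 => 1 | 1,2 => a2 | 2,2 => -1 | 2,3 => 1 | 3,2 => -1
  | _,_ => 0 end.
Definition B2m : 'M[R]_4 := \matrix_(i < 4, j < 4)
  match nat_of_ord i, nat_of_ord j with
  | 0,1 => -1 | 1,0 => 1 | 1,1 => -1 | 2,1 => b3 | 2,2 => 1 | 3,1 => b4 | 3,3 => 1
  | _,_ => 0 end.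
Definition ABm : 'M[R]_4 := \matrix_(i < 4, j < 4)
  match nat_of_ord i, nat_of_ord j with
  | 0,0 => a1*b4 - 1 | 0,1 => 1 | 0,3 => a1
  | 1,0 => a2*b4 - 1 | 1,3 => a2
  | 2,0 => - b4 | 2,3 => -1
  | 3,0 => b3 - b4 | 3,2 => 1 | 3,3 => -1
  | _,_ => 0 end.
Definition ABA2m : 'M[R]_4 := \matrix_(i < 4, j < 4)
  match nat_of_ord i, nat_of_ord j with
  | 0,0 => a1*b4 - 1 | 0,1 => 1 | 0,2 => a1^+2*b4 - 2*a1 + a2
  | 1,0 => a2*b4 - 1 | 1,2 => a1*a2*b4 - a1 - a2
  | 2,0 => - b4 | 2,2 => - a1*b4 + 1
  | 3,0 => b3 - b4 | 3,2 => a1*b3 - a1*b4 | 3,3 => 1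
  | _,_ => 0 end.
Definition Cm : 'M[R]_4 := \matrix_(i < 4, j < 4)
  match nat_of_ord i, nat_of_ord j with
  | 0,0 => 1 | 0,1 => a1^+2*b3*b4 - 2*a1*b3 - a1*b4 + a2*b3 | 0,2 => a1^+2*b4 - 2*a1 + a2
  | 1,1 => a1*a2*b3*b4 - a1*b3 - a2*b3 - a2*b4 + 1 | 1,2 => a1*a2*b4 - a1 - a2
  | 2,1 => - a1*b3*b4 + b3 + b4 | 2,2 => - a1*b4 + 1
  | 3,1 => a1*b3^+2 - a1*b3*b4 - b3 + 2*b4 | 3,2 => a1*b3 - a1*b4 | 3,3 => 1
  | _,_ => 0 end.

Definition m01 := a1^+2*b3^+2 - 3*a1*b3 + a1*b4 + a2*b3.
Definition m02 := a1^+2*b3 - 2*a1 + a2.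
Definition m03 := a1.
Definition m11 := a1*a2*b3^+2 - a1*b3 - 2*a2*b3 + a2*b4 + 1.
Definition m12 := a1*a2*b3 - a1 - a2.
Definition m13 := a2.
Definition m21 := - a1*b3^+2 + a1*b3*b4 + b3 - 2*b4.
Definition m22 := - a1*b3 + a1*b4.
Definition m23 : R := -1.
Definition m31 := - a1*b3^+2 + 2*b3 - b4.
Definition m32 := - a1*b3 + 1.
Definition m33 : R := -1.

Definition Mm : 'M[R]_4 := \matrix_(i < 4, j < 4)
  match nat_of_ord i, nat_of_ord j with
  | 0,0 => 1 | 0,1 => m01 | 0,2 => m02 | 0,3 => m03
  | 1,1 => m11 | 1,2 => m12 | 1,3 => m13
  | 2,1 => m21 | 2,2 => m22 | 2,3 => m23
  | 3,1 => m31 | 3,2 => m32 | 3,3 => m33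
  | _,_ => 0 end.

Lemma AA2 : matA a1 a2 *m A2m = 1%:M. Proof. mxtac. Qed.
Lemma BB2 : matB b3 b4 *m B2m = 1%:M. Proof. mxtac. Qed.

Lemma invE {n} {X Y : 'M[R]_n.+1} : X *m Y = 1%:M -> invmx X = Y.
Proof.
move=> h; have [uX _] := mulmx1_unit h.
by rewrite -[invmx X]mulmx1 -h mulmxA mulVmx // mul1mx.
Qed.

Lemma ABE : matA a1 a2 *m matB b3 b4 = ABm. Proof. mxtac. Qed.
Lemma ABA2E : ABm *m A2m = ABA2m. Proof. mxtac. Qed.
Lemma CmE : ABA2m *m B2m = Cm. Proof. mxtac. Qed.
Lemma matCE : matC a1 a2 b3 b4 = Cm.
Proof. by rewrite /matC (invE AA2) (invE BB2) ABE ABA2E CmE. Qed.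
Lemma MmE : matA a1 a2 *m matC a1 a2 b3 b4 = Mm.
Proof. rewrite matCE /Mm /m01 /m02 /m03 /m11 /m12 /m13 /m21 /m22 /m23 /m31 /m32 /m33; mxtac. Qed.

Definition tt := a1*a2*b3^+2 - 2*a1*b3 + a1*b4 - 2*a2*b3 + a2*b4.
Definition ss := a1*a2*b4^+2 + a1*b3 - 2*a1*b4 + a2*b3 - 2*a2*b4.
Definition pp (x : R) := x^+3 - tt*x^+2 + ss*x - 1.
Definition dp (x : R) := 3*x^+2 - 2*tt*x + ss.

Definition Mp := mat3 m11 m12 m13 m21 m22 m23 m31 m32 m33.
Definition Ap := mat3 1 0 a2 0 0 (-1) 0 1 (-1).

Lemma Ap3 : Ap *m (Ap *m Ap) = 1%:M.
Proof.
rewrite /Ap !mat3_mul.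
apply/matrixP => -[[|[|[|?]]] ?] -[[|[|[|?]]] ?]; rewrite !mxE //=; ring.
Qed.

Lemma comm1 : b4 = (3 - (a1+a2)*b3)/(a1+a2-a1*a2*b3) -> a1+a2-a1*a2*b3 != 0 -> (Ap *m Ap *m Mp *m Ap) *m Mp = Mp *m (Ap *m Ap *m Mp *m Ap).
Proof.
move=> hb4 hc.
rewrite /Ap /Mp /m11 /m12 /m13 /m21 /m22 /m23 /m31 /m32 /m33 !mat3_mul hb4.
congr mat3; field; exact: hc.
Qed.

Lemma comm2 : b4 = (3 - (a1+a2)*b3)/(a1+a2-a1*a2*b3) -> a1+a2-a1*a2*b3 != 0 -> (Ap *m Mp *m Ap *m Ap) *m Mp = Mp *m (Ap *m Mp *m Ap *m Ap).
Proof.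
move=> hb4 hc.
rewrite /Ap /Mp /m11 /m12 /m13 /m21 /m22 /m23 /m31 /m32 /m33 !mat3_mul hb4.
congr mat3; field; exact: hc.
Qed.

Lemma eigX (l : R) : pp l = 0 -> dp l != 0 ->
  exists x0 x1 x2, [/\ vec3 x0 x1 x2 != 0,
    vec3 x0 x1 x2 *m Mp = l *: vec3 x0 x1 x2 &
    forall Y, Y *m Mp = l *: Y -> exists k, Y = k *: vec3 x0 x1 x2].
Proof.
move=> hp hdp.
have hd : det3 (m11 - l) m12 m13 m21 (m22 - l) m23 m31 m32 (m33 - l) = 0.
  rewrite -[RHS]oppr0 -hp /det3 /pp /tt /ss /m11 /m12 /m13 /m21 /m22 /m23 /m31 /m32 /m33.
  ring.
have hpm : ((m11 - l)*(m22 - l) - m12* m21) + ((m11 - l)*(m33 - l) - m13* m31)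
   + ((m22 - l)*(m33 - l) - m23* m32) != 0.
  move: hdp; congr (_ != _).
  rewrite /dp /tt /ss /m11 /m12 /m13 /m21 /m22 /m23 /m31 /m32 /m33; ring.
have [x0 [x1 [x2 [nz e0 e1 e2 ker]]]] := @ker3 _ _ _ _ _ _ _ _ _ _ hd hpm.
exists x0, x1, x2; split.
- by apply/vec3_neq0.
- rewrite /Mp vec3_mul vec3Z; congr vec3; lra.
move=> Y; rewrite (vec3_eta Y) /Mp vec3_mul vec3Z => /vec3_inj [h0 h1 h2].
have [k [k0 k1 k2]] := ker (Y 0 0) (Y 0 1) (Y 0 2%:R) ltac:(lra) ltac:(lra) ltac:(lra).
by exists k; rewrite vec3Z k0 k1 k2.
Qed.

Lemma noeig (Y : 'rV[R]_3) (k lam : R) : a2 != 0 -> Y != 0 ->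
  Y *m Ap = k *: Y -> Y *m Mp = lam *: Y -> lam = 1.
Proof.
move=> ha2; rewrite (vec3_eta Y) /Ap /Mp !vec3_mul !vec3Z.
set y0 := Y 0 0; set y1 := Y 0 1; set y2 := Y 0 2%:R.
move=> /vec3_neq0 nz /vec3_inj [h0 h1 h2] /vec3_inj [_ _ h3].
move: h3; rewrite /m13 /m23 /m33 => h3.
have h0' : y0 = k*y0 by lra.
have h1' : y2 = k*y1 by lra.
have h2' : y0*a2 - y1 - y2 = k*y2 by lra.
have h3' : y0*a2 - y1 - y2 = lam*y2 by lra.
have [y00|y0n] := eqVneq y0 0.
  rewrite y00 h1' in h2'.
  have e1 : y1 * (k^+2 + k + 1) = 0 by lra.
  move: e1 => /eqP; rewrite mulf_eq0 => /orP [/eqP y10|].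
    by exfalso; apply: nz; split => //; rewrite h1' y10 mulr0.
  move=> /eqP h; exfalso.
  have : 0 < k^+2 + k + 1 by nra.
  by rewrite h ltxx.
have k1 : k = 1.
  by apply: (mulIf y0n); rewrite mul1r -h0'.
rewrite k1 mul1r in h1' h2'.
have [y10|y1n] := eqVneq y1 0.
  exfalso; move/negP: y0n; apply; apply/eqP.
  have : a2 * y0 = 0 by rewrite y10 in h1' h2'; lra.
  by move/eqP; rewrite mulf_eq0 (negbTE ha2) /= => /eqP.
apply: (mulIf y1n); rewrite mul1r.
rewrite h1' in h2' h3'; lra.
Qed.

Lemma eigpos (Y : 'rV[R]_3) (lam : R) : 0 <= tt -> 0 <= ss -> Y != 0 ->
  Y *m Mp = lam *: Y -> 0 < lam.
Proof.
move=> ht hs; rewrite (vec3_eta Y) /Mp !vec3_mul !vec3Z.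
set y0 := Y 0 0; set y1 := Y 0 1; set y2 := Y 0 2%:R.
move=> /vec3_neq0 nz /vec3_inj [h0 h1 h2].
have hd : det3 (m11 - lam) m12 m13 m21 (m22 - lam) m23 m31 m32 (m33 - lam) = 0.
  by apply: (@detker _ _ _ _ _ _ _ _ _ _ y0 y1 y2); [lra|lra|lra|exact: nz].
have hp : pp lam = 0.
  rewrite -[RHS]oppr0 -hd /det3 /pp /tt /ss /m11 /m12 /m13 /m21 /m22 /m23 /m31 /m32 /m33.
  ring.
move: hp; rewrite /pp => hp.
rewrite ltNge; apply/negP => hl.
have : lam^+3 - tt*lam^+2 + ss*lam - 1 < 0.
  have h1' : lam^+3 <= 0 by rewrite exprS; nra.
  have h2' : 0 <= tt*lam^+2 by apply: mulr_ge0 => //; rewrite sqr_ge0.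
  have h3' : ss*lam <= 0 by nra.
  lra.
by rewrite hp ltxx.
Qed.

Arguments eigX {l}.
Arguments noeig {Y k lam}.
Arguments eigpos {Y lam}.

Lemma ApK (Z : 'rV[R]_3) : Z *m Ap *m Ap *m Ap = Z.
Proof. by rewrite -!mulmxA Ap3 mulmx1. Qed.

Lemma core (l : R) : a2 != 0 -> 0 <= tt -> 0 <= ss ->
  b4 = (3 - (a1+a2)*b3)/(a1+a2-a1*a2*b3) -> a1+a2-a1*a2*b3 != 0 ->
  pp l = 0 -> l != 1 -> dp l != 0 ->
  exists x0 x1 x2 mu nu, [/\ vec3 x0 x1 x2 *m Mp = l *: vec3 x0 x1 x2,
    (vec3 x0 x1 x2 *m Ap *m Ap) *m Mp = mu *: (vec3 x0 x1 x2 *m Ap *m Ap),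
    (vec3 x0 x1 x2 *m Ap) *m Mp = nu *: (vec3 x0 x1 x2 *m Ap),
    0 < mu /\ 0 < nu &
    forall v0 v1 v2, v0 *: vec3 x0 x1 x2 + v1 *: (vec3 x0 x1 x2 *m Ap *m Ap)
       + v2 *: (vec3 x0 x1 x2 *m Ap) = 0 -> [/\ v0 = 0, v1 = 0 & v2 = 0]].
Proof.
move=> ha2 ht hs hb4 hc hp hl1 hdp.
have [x0 [x1 [x2 [Xnz hX ker]]]] := eigX hp hdp.
set X := vec3 x0 x1 x2 in Xnz hX ker *.
set E := X *m Ap *m Ap.
set F := X *m Ap.
have [mu hmu] : exists k, X *m (Ap *m Ap *m Mp *m Ap) = k *: X.
  set N1 := Ap *m Ap *m Mp *m Ap.
  have c1 : N1 *m Mp = Mp *m N1 := comm1 hb4 hc.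
  apply: ker; by rewrite -mulmxA c1 mulmxA hX -scalemxAl.
have [nu hnu] : exists k, X *m (Ap *m Mp *m Ap *m Ap) = k *: X.
  set N2 := Ap *m Mp *m Ap *m Ap.
  have c2 : N2 *m Mp = Mp *m N2 := comm2 hb4 hc.
  apply: ker; by rewrite -mulmxA c2 mulmxA hX -scalemxAl.
have hE : E *m Mp = mu *: E.
  have -> : E *m Mp = X *m (Ap *m Ap *m Mp *m Ap) *m Ap *m Ap.
    by rewrite /E !mulmxA ApK.
  by rewrite hmu -!scalemxAl.
have hF : F *m Mp = nu *: F.
  have -> : F *m Mp = X *m (Ap *m Mp *m Ap *m Ap) *m Ap.
    by rewrite /F !mulmxA ApK.
  by rewrite hnu -!scalemxAl.
have EA : E *m Ap = X by rewrite /E ApK.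
have FA : F *m Ap = E by [].
have Enz : E != 0.
  by apply/eqP => E0; move/eqP: Xnz; apply; rewrite -EA E0 mul0mx.
have Fnz : F != 0.
  by apply/eqP => F0; move/eqP: Enz; apply; rewrite -FA F0 mul0mx.
have lmu : mu != l.
  apply/eqP => ml; rewrite ml in hE.
  have [k Ek] := ker E hE.
  have kn : k != 0 by apply/eqP => k0; move/eqP: Enz; apply; rewrite Ek k0 scale0r.
  have : X *m Ap = k^-1 *: X.
    by rewrite -[in RHS]EA Ek -scalemxAl scalerA mulVf // scale1r.
  by move/(noeig ha2 Xnz)/(_ hX)/eqP; rewrite (negbTE hl1).
have lnu : nu != l.
  apply/eqP => nl; rewrite nl in hF.
  have [k Fk] := ker F hF.
  by move: (noeig ha2 Xnz Fk hX) => /eqP; rewrite (negbTE hl1).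
exists x0, x1, x2, mu, nu; split => //.
  by split; [exact: eigpos ht hs Enz hE | exact: eigpos ht hs Fnz hF].
move=> v0 v1 v2 hZ.
change (v0 *: X + v1 *: E + v2 *: F = 0) in hZ.
clearbody E F X.
have Z1 : v0 *: (l *: X) + v1 *: (mu *: E) + v2 *: (nu *: F) = 0.
  by have := congr1 (mulmx^~ Mp) hZ; rewrite mul0mx !mulmxDl -!scalemxAl hX hE hF.
have Z2 : v0 *: (l *: (l *: X)) + v1 *: (mu *: (mu *: E)) + v2 *: (nu *: (nu *: F)) = 0.
  by have := congr1 (mulmx^~ Mp) Z1; rewrite mul0mx !mulmxDl -!scalemxAl !hX !hE !hF.
have v00 : v0 = 0.
  have : (v0 * (l - mu) * (l - nu)) *: X = 0.
    apply/rowP => j.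
    have e0 := congr1 (fun M : 'rV_3 => M 0 j) hZ.
    have e1 := congr1 (fun M : 'rV_3 => M 0 j) Z1.
    have e2 := congr1 (fun M : 'rV_3 => M 0 j) Z2.
    move: e0 e1 e2; rewrite /= !mxE => e0 e1 e2.
    exact: (lincomb _ _ _ _ _ _ _ _ _ e0 e1 e2).
  move/eqP; rewrite scalemx_eq0 (negbTE Xnz) orbF !mulf_eq0 !subr_eq0.
  have lmu' : l != mu by rewrite eq_sym.
  have lnu' : l != nu by rewrite eq_sym.
  by rewrite (negbTE lmu') (negbTE lnu') !orbF => /eqP.
rewrite v00 scale0r add0r in hZ.
have [v20|v2n] := eqVneq v2 0.
  rewrite v20 scale0r addr0 in hZ; split => //.
  by move/eqP: hZ; rewrite scalemx_eq0 (negbTE Enz) orbF => /eqP.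
exfalso.
have hFE : F = (- (v1 / v2)) *: E.
  apply/rowP => j; have := congr1 (fun M : 'rV_3 => M 0 j) hZ.
  rewrite /= !mxE => e; exact: (solve1 _ _ _ _ v2n e).
have EX : E = (- (v1 / v2)) *: X by rewrite -FA hFE -scalemxAl EA.
have : E *m Mp = l *: E by rewrite {1}EX -scalemxAl hX EX !scalerA mulrC.
rewrite hE => /eqP; rewrite -subr_eq0 -scalerBl scalemx_eq0 (negbTE Enz) orbF subr_eq0.
by rewrite (negbTE lmu).
Qed.

Definition f0 := a1*a2*b3 + a1*a2*b4 - 3*a1 - 3*a2.
Definition f1 := - a1^+2*b3 - a1^+2*b4 + 6*a1 - 3*a2.
Definition f2 := - a1^+2 + a1*a2 - a2^+2.

Definition Pm (x0 x1 x2 : R) : 'M[R]_4 := \matrix_(i < 4, j < 4)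
  match nat_of_ord i, nat_of_ord j with
  | 0,1 => x0 | 0,2 => x1 | 0,3 => x2
  | 1,1 => x0 | 1,2 => a2*x0 - x1 - x2 | 1,3 => x1
  | 2,1 => x0 | 2,2 => x2 | 2,3 => a2*x0 - x1 - x2
  | 3,0 => f0 | 3,1 => f1 | 3,2 => f2 | 3,3 => f2
  | _,_ => 0 end.

Lemma XAp x0 x1 x2 : vec3 x0 x1 x2 *m Ap = vec3 x0 x2 (a2*x0 - x1 - x2).
Proof. by rewrite /Ap vec3_mul; congr vec3; ring. Qed.
Lemma XApAp x0 x1 x2 : vec3 x0 x1 x2 *m Ap *m Ap = vec3 x0 (a2*x0 - x1 - x2) x1.
Proof. by rewrite !XAp; congr vec3; ring. Qed.

Lemma PA x0 x1 x2 : Pm x0 x1 x2 *m matA a1 a2 = permA R *m Pm x0 x1 x2.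
Proof. rewrite /Pm /f0 /f1 /f2; mxtac. Qed.

Lemma via (a b c d : R) : a = b -> c - d = a - b -> c = d.
Proof. by move=> h e; apply/eqP; rewrite -subr_eq0 e h subrr. Qed.

Lemma PM x0 x1 x2 l mu nu :
  vec3 x0 x1 x2 *m Mp = l *: vec3 x0 x1 x2 ->
  (vec3 x0 x1 x2 *m Ap *m Ap) *m Mp = mu *: (vec3 x0 x1 x2 *m Ap *m Ap) ->
  (vec3 x0 x1 x2 *m Ap) *m Mp = nu *: (vec3 x0 x1 x2 *m Ap) ->
  Pm x0 x1 x2 *m Mm = diag4 l mu nu *m Pm x0 x1 x2.
Proof.
rewrite XApAp XAp /Mp !vec3_mul !vec3Z.
move=> /vec3_inj [h0 h1 h2] /vec3_inj [h3 h4 h5] /vec3_inj [h6 h7 h8].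
rewrite /Pm /Mm /diag4; mxtac;
  first [ apply: (via _ _ _ _ h0); ring | apply: (via _ _ _ _ h1); ring | apply: (via _ _ _ _ h2); ring
        | apply: (via _ _ _ _ h3); ring | apply: (via _ _ _ _ h4); ring | apply: (via _ _ _ _ h5); ring
        | apply: (via _ _ _ _ h6); ring | apply: (via _ _ _ _ h7); ring | apply: (via _ _ _ _ h8); ring
        | (rewrite /f0 /f1 /f2 /m01 /m02 /m03 /m11 /m12 /m13 /m21 /m22 /m23 /m31 /m32 /m33; ring) ].
Qed.

Definition vec4 (x0 x1 x2 x3 : R) : 'rV[R]_4 :=
  \row_(j < 4) match nat_of_ord j with 0 => x0 | 1 => x1 | 2 => x2 | _ => x3 end.

Lemma vec4_eta (Y : 'rV[R]_4) : Y = vec4 (Y 0 0) (Y 0 1) (Y 0 2%:R) (Y 0 3%:R).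
Proof.
apply/matrixP => i [[|[|[|[|?]]]] Hj]; rewrite !mxE //= (ord1 i);
  by congr (Y _ _); apply/val_inj.
Qed.

Lemma Punit x0 x1 x2 : f0 != 0 ->
  (forall v0 v1 v2, v0 *: vec3 x0 x1 x2 + v1 *: (vec3 x0 x1 x2 *m Ap *m Ap)
       + v2 *: (vec3 x0 x1 x2 *m Ap) = 0 -> [/\ v0 = 0, v1 = 0 & v2 = 0]) ->
  Pm x0 x1 x2 \in unitmx.
Proof.
move=> hf ind; rewrite unitmxE unitfE; apply/negP => /det0P [v vnz vP].
move: vnz vP; rewrite (vec4_eta v).
move: (v 0 0) (v 0 1) (v 0 2%:R) (v 0 3%:R) => w0 w1 w2 w3 vnz vP.
have c0 := congr1 (fun M : 'rV_4 => M 0 0) vP.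
have c1 := congr1 (fun M : 'rV_4 => M 0 1) vP.
have c2 := congr1 (fun M : 'rV_4 => M 0 2%:R) vP.
have c3 := congr1 (fun M : 'rV_4 => M 0 3%:R) vP.
move: c0 c1 c2 c3; rewrite /= !mxE !big_ord_recl !big_ord0 !mxE /= => c0 c1 c2 c3.
have e3 : w3 * f0 = 0 by lra.
have w30 : w3 = 0.
  by move/eqP: e3; rewrite mulf_eq0 (negbTE hf) orbF => /eqP.
rewrite w30 in c1 c2 c3.
have [w00 w10 w20] : [/\ w0 = 0, w1 = 0 & w2 = 0].
  apply: ind; rewrite XApAp XAp !vec3Z !vec3D; apply/vec3_eq0; split; lra.
by move: vnz; rewrite w00 w10 w20 w30; apply/negP/negPn/eqP/matrixP => i [[|[|[|[|?]]]] ?]; rewrite !mxE.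
Qed.

Lemma main_sec :
  (a1 + a2) * (b3 + b4) = 3 + a1 * a2 * b3 * b4 ->
  inX (a1 * b4) (a1 * b3) (a2 * b3) (a2 * b4) ->
  ~ (a1 * b4 = 3 /\ a1 * b3 = 3 /\ a2 * b3 = 3 /\ a2 * b4 = 3) ->
  exists (P : 'M[R]_4) (l1 l2 l3 : R),
    [/\ P \in unitmx,
        P *m matA a1 a2 *m invmx P = permA R,
        P *m (matA a1 a2 *m matC a1 a2 b3 b4) *m invmx P = diag4 l1 l2 l3,
        [/\ 0 < l1, 0 < l2 & 0 < l3] &
        l1 != 1 /\ l1 != -1].
Proof.
move=> hg [e1 e2 hx hz] hnp.
have ha2 : a2 != 0.
  by apply/eqP => a20; move: hz; rewrite a20 mul0r; lra.
have hc : a1 + a2 - a1*a2*b3 != 0.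
  apply/eqP => c0.
  have ea : a1 + a2 = a1*a2*b3 by lra.
  have p1 : a1*a2*b3^+2 = 3.
    move: hg; rewrite ea => hg'; lra.
  have s1 : a1*b3 + a2*b3 = 3.
    have : (a1 + a2)*b3 = a1*a2*b3*b3 by rewrite ea.
    lra.
  have : (a1*b3 - a2*b3)^+2 = (a1*b3 + a2*b3)^+2 - 4*(a1*a2*b3^+2) by ring.
  rewrite s1 p1 => h.
  have := sqr_ge0 (a1*b3 - a2*b3); rewrite h; lra.
have hb4 : b4 = (3 - (a1+a2)*b3)/(a1+a2-a1*a2*b3).
  by apply: (mulIf hc); rewrite divfK //; lra.
have [hT hS] := region' (a1*b3 - 1) (a2*b3 - 1) (a1*b4 - 1) (a2*b4 - 1)
  ltac:(lra) ltac:(lra) ltac:(lra) ltac:(lra)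
  ltac:(by case=> h1 h2 h3 h4; apply: hnp; split; [lra|split; [lra|split; lra]]).
have ht : 3 < tt.
  have : tt - 3 = (a1*b3-1)*(a2*b3-1) - (a1*b3-1) - (a2*b3-1) + (a1*b4-1) + (a2*b4-1) - 4
    by rewrite /tt; ring.
  lra.
have hs : 3 <= ss.
  have : ss - 3 = (a1*b4-1)*(a2*b4-1) - (a1*b4-1) - (a2*b4-1) + (a1*b3-1) + (a2*b3-1) - 4
    by rewrite /ss; ring.
  lra.
have hf0 : f0 != 0.
  have : f0 * b3 = tt - 3 by rewrite /f0 /tt; lra.
  by move=> h; apply/eqP => f00; move: h; rewrite f00 mul0r; lra.
have [l [hp hl1 hdp l0]] := root_simple tt ss ht ltac:(lra).
have [x0 [x1 [x2 [mu [nu [hX hE hF [mu0 nu0] ind]]]]]] :=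
  core l ha2 ltac:(lra) ltac:(lra) hb4 hc hp hl1 hdp.
have Pu := Punit x0 x1 x2 hf0 ind.
exists (Pm x0 x1 x2), l, mu, nu; split => //.
- by rewrite PA -mulmxA mulmxV // mulmx1.
- by rewrite MmE (PM _ _ _ _ _ _ hX hE hF) -mulmxA mulmxV // mulmx1.
- split => //; apply/eqP => h; move: l0; rewrite h; lra.
Qed.

End S4.

Theorem lemma3p3 (R : realType) (a1 a2 b3 b4 : R) :
  (a1 + a2) * (b3 + b4) = 3 + a1 * a2 * b3 * b4 ->
  inX (a1 * b4) (a1 * b3) (a2 * b3) (a2 * b4) ->
  ~ (a1 * b4 = 3 /\ a1 * b3 = 3 /\ a2 * b3 = 3 /\ a2 * b4 = 3) ->
  exists (P : 'M[R]_4) (l1 l2 l3 : R),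
    [/\ P \in unitmx,
        P *m matA a1 a2 *m invmx P = permA R,
        P *m (matA a1 a2 *m matC a1 a2 b3 b4) *m invmx P = diag4 l1 l2 l3,
        [/\ 0 < l1, 0 < l2 & 0 < l3] &
        l1 != 1 /\ l1 != -1].
Proof. exact: main_sec. Qed.
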